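(* Let $f:\{0,1\}^n\to\{0,1\}$ be a Boolean function computed by a minimal read-$k$ DNF formula with size $\alpha$ and maximum width $\beta$. Then $\mathsf N(\overline f)\ge\Omega\!\left(\sqrt{\frac{\alpha}{k\beta}}\right)$.
   Context: $\mathsf N(g)$ is the minimum degree of a real polynomial $p$ with $|p(x)|\le1/3$ whenever $g(x)=0$ and $|p(x)|\ge1$ whenever $g(x)=1$; $\overline f=1-f$. A DNF formula is an OR of terms (ANDs of literals); it is read-$k$ if every variable appears at most $k$ times across the terms; its size is the number of terms and its width is the maximum number of literals in a term. Constants are absolute. *)

(* Defs.v *)
From HB Require Import structures.
From mathcomp Require Import all_boot all_order all_algebra.
From mathcomp Require Import Rstruct.
From mathcomp Require Import mpoly.
From Stdlib Require Import Reals ClassicalEpsilon.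

Set Implicit Arguments.
Unset Strict Implicit.
Unset Printing Implicit Defensive.

Import GRing.Theory.

Definition cube (n : nat) := {ffun 'I_n -> bool}.
Definition boolfun (n : nat) := cube n -> bool.

Definition bcompl (n : nat) (f : boolfun n) : boolfun n := fun x => ~~ f x.

(* total degree of a multivariate polynomial (degree of 0 taken as 0) *)
Definition mpdeg (n : nat) (p : {mpoly R[n]}) : nat := (msize p).-1.

Definition cube_pt (n : nat) (x : cube n) : 'I_n -> R :=
  fun i => if x i then R1 else R0.

Definition N_witness (n : nat) (g : boolfun n) (p : {mpoly R[n]}) : Prop :=
  forall x : cube n,
    (g x = false -> Rabs (p.@[cube_pt x]) <= 1/3)%R /\
    (g x = true -> 1 <= Rabs (p.@[cube_pt x]))%R.

Definition N_achievable (n : nat) (g : boolfun n) (d : nat) : Prop :=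
  exists p : {mpoly R[n]}, N_witness g p /\ mpdeg p = d.

Definition N_is_min (n : nat) (g : boolfun n) (d : nat) : Prop :=
  N_achievable g d /\ forall d', N_achievable g d' -> (d <= d')%N.

(* N(g) = minimum degree of such a polynomial (such polynomials always exist,
   e.g. the multilinear interpolant of g; the default 0 is never used). *)
Definition Ndeg (n : nat) (g : boolfun n) : nat :=
  match excluded_middle_informative (exists d, N_is_min g d) with
  | left H => proj1_sig (constructive_indefinite_description _ H)
  | right _ => 0%N
  end.

(* a literal (i, b) means "x_i = b": (i,true) is x_i, (i,false) is its negation *)
Definition literal (n : nat) := ('I_n * bool)%type.
Definition term (n : nat) := seq (literal n).
Definition dnf (n : nat) := seq (term n).

Definition term_eval (n : nat) (t : term n) (x : cube n) : bool :=
  all (fun l : literal n => x l.1 == l.2) t.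

Definition dnf_eval (n : nat) (F : dnf n) (x : cube n) : bool :=
  has (fun t => term_eval t x) F.

Definition computes (n : nat) (F : dnf n) (f : boolfun n) : Prop :=
  forall x, f x = dnf_eval F x.

Definition dnf_size (n : nat) (F : dnf n) : nat := size F.

Definition dnf_width (n : nat) (F : dnf n) : nat :=
  \max_(t <- F) size t.

Definition read_k (n : nat) (k : nat) (F : dnf n) : Prop :=
  forall i : 'I_n, (\sum_(t <- F) count (fun l : literal n => l.1 == i) t <= k)%N.

Definition minimal_dnf (n : nat) (F : dnf n) : Prop :=
  (forall t, t \in F -> exists x, dnf_eval (rem t F) x != dnf_eval F x) /\
  (forall t l, t \in F -> l \in t ->
     exists x, dnf_eval (rem l t :: rem t F) x != dnf_eval F x).

(* Main.v *)
Require Import Defs.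
From HB Require Import structures.
From mathcomp Require Import all_boot all_order all_algebra.
From mathcomp Require Import Rstruct.
From mathcomp Require Import mpoly.
From Stdlib Require Import Reals.
From mathcomp Require Import qpoly.
From Stdlib Require Import Classical_Prop ClassicalEpsilon.
From mathcomp Require Import lra zify ring.
Import GRing.Theory Num.Theory Order.TTheory.
Set Implicit Arguments.
Unset Strict Implicit.
Unset Printing Implicit Defensive.
Local Open Scope nat_scope.

Definition dist (a b : nat) := (a - b) + (b - a).

Lemma fact_mono d i : i <= d -> d`! * d`! <= (d - i)`! * (d + i)`!.
Proof.
elim: i => [|i IH] hi; first by rewrite subn0 addn0.
apply: (leq_trans (IH (ltnW hi))).
have -> : d - i = (d - i.+1).+1 by rewrite subnSK.
rewrite factS addnS factS.
rewrite [_.+1 * _]mulnC -mulnA.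
apply: leq_mul => //; apply: leq_mul => //.
by rewrite ltnS; apply: (leq_trans (leq_subr _ _)); apply: leq_addr.
Qed.
Lemma I1 d i : 0 < i <= d -> (\prod_(1 <= j < d.+1 | j != i) j) * i = d`!.
Proof.
move=> /andP[i0 id].
rewrite fact_prod (bigD1_seq i) ?iota_uniq //=; last by rewrite mem_index_iota ltnS i0 id.
by rewrite mulnC.
Qed.

Lemma I2a d i : i`! * \prod_(1 <= j < d.+1) (j + i) = (d + i)`!.
Proof.
elim: d => [|d IH]; first by rewrite big_geq // muln1.
by rewrite big_nat_recr //= mulnA IH addSn factS mulnC.
Qed.

Lemma I2b d i : 0 < i <= d ->
  (\prod_(1 <= j < d.+1 | j != i) (j + i)) * (i + i) = \prod_(1 <= j < d.+1) (j + i).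
Proof.
move=> /andP[i0 id].
rewrite [RHS](bigD1_seq i) ?iota_uniq //=; last by rewrite mem_index_iota ltnS i0 id.
by rewrite mulnC.
Qed.

Lemma prod_nat_condT m n (P : pred nat) (F : nat -> nat) :
  (forall j, m <= j < n -> P j) ->
  \prod_(m <= j < n | P j) F j = \prod_(m <= j < n) F j.
Proof.
move=> H; rewrite big_nat_cond [RHS]big_nat_cond; apply: eq_bigl => j.
by case: (boolP (m <= j < n)) => h //=; rewrite H.
Qed.

Lemma I3 d i : 0 < i <= d ->
  \prod_(1 <= j < d.+1 | j != i) dist j i = (i.-1)`! * (d - i)`!.
Proof.
move=> /andP[i0 id].
rewrite (big_cat_nat _ (n := i)) //=; last by rewrite ltnW.
rewrite [X in _ * X]big_ltn_cond ?ltnS //= eqxx /=.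
congr (_ * _).
  rewrite prod_nat_condT; last by move=> j /andP[_ hj]; rewrite (ltn_eqF hj).
  rewrite big_nat_rev /=.
  have -> : i = (i.-1).+1 by rewrite prednK.
  rewrite fact_prod; apply: congr_big_nat => // j /andP[j1 hj].
  rewrite /dist; lia.
rewrite prod_nat_condT; last by move=> j /andP[hj _]; rewrite (gtn_eqF hj).
rewrite -[i.+1]add1n big_addn subSn // fact_prod; apply: congr_big_nat => // j _.
rewrite /dist; lia.
Qed.
Lemma I4 j i : dist (j * j) (i * i) = dist j i * (j + i).
Proof. rewrite /dist; case: (leqP j i) => h; nia. Qed.

Lemma G_nat d i : 0 < i <= d ->
  \prod_(1 <= j < d.+1 | j != i) (j * j) <=
  2 * \prod_(1 <= j < d.+1 | j != i) dist (j * j) (i * i).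
Proof.
move=> hid; have /andP[i0 id] := hid.
rewrite [X in _ <= 2 * X](eq_bigr (fun j => dist j i * (j + i))); last by move=> j _; rewrite I4.
rewrite !big_split /= I3 //.
set X := \prod_(1 <= j < d.+1 | j != i) j.
set S := \prod_(1 <= j < d.+1 | j != i) (j + i).
have e1 := I1 hid. have e2 := I2b hid. have e3 := I2a d i. have e4 := fact_mono id.
fold X in e1. fold S in e2.
have fi : i`! = i * (i.-1)`! by rewrite -{1}(prednK i0) factS prednK.
have pos : 0 < i * i * i`! by rewrite !muln_gt0 i0 fact_gt0.
rewrite -(leq_pmul2r pos).
have -> : X * X * (i * i * i`!) = d`! * d`! * i`! by rewrite -e1; ring.
have -> : 2 * ((i.-1)`! * (d - i)`! * S) * (i * i * i`!) = (d - i)`! * (d + i)`! * i`!.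
  by rewrite -e3 -e2 fi; ring.
by rewrite leq_mul2r e4 orbT.
Qed.
Local Open Scope ring_scope.
Section NumF.
Variable F : realFieldType.

Lemma natr_dist (a b : nat) : `|(a%:R : F) - b%:R| = (dist a b)%:R.
Proof.
rewrite /dist; case: (leqP a b) => h.
  have -> : (a - b)%nat = 0%nat by apply/eqP; rewrite subn_eq0.
  rewrite add0n (natrB _ h) distrC ger0_norm; first by [].
  by rewrite subr_ge0 ler_nat.
have -> : (b - a)%nat = 0%nat by apply/eqP; rewrite subn_eq0 ltnW.
rewrite addn0 (natrB _ (ltnW h)) ger0_norm; first by [].
by rewrite subr_ge0 ler_nat ltnW.
Qed.
Lemma Greal d i : (0 < i <= d)%nat ->
  \prod_(1 <= j < d.+1 | j != i) ((j%:R ^+ 2 : F) / `|j%:R ^+ 2 - i%:R ^+ 2|) <= 2.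
Proof.
move=> hid.
rewrite prodf_div.
have pos : 0 < \prod_(1 <= j < d.+1 | j != i) (`|j%:R ^+ 2 - i%:R ^+ 2| : F).
  apply: prodr_gt0 => j hj; rewrite normr_gt0 subr_eq0.
  by rewrite -!natrX eqr_nat eqn_sqr.
rewrite ler_pdivrMr //.
rewrite (eq_bigr (fun j => ((j * j)%nat)%:R)); last by move=> j _; rewrite natrM expr2.
rewrite [X in _ <= 2 * X](eq_bigr (fun j => (dist (j * j) (i * i))%:R)); last first.
  by move=> j _; rewrite -natr_dist !natrM !expr2.
rewrite -!natr_prod -natrM ler_nat.
exact: G_nat.
Qed.
Definition rho : F := 1 / 16.
Definition u (j : nat) : F := rho + j%:R ^+ 2.
Definition S2 d : F := \sum_(1 <= j < d.+1) (j%:R ^+ 2)^-1.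
Definition E d : F := \prod_(1 <= j < d.+1) (1 + rho / j%:R ^+ 2).

Lemma S2_ge0 d : 0 <= S2 d.
Proof. by apply: sumr_ge0 => j _; rewrite invr_ge0 exprn_ge0 // ler0n. Qed.

Lemma E_ge0 d : 0 <= E d.
Proof.
apply: prodr_ge0 => j _; apply: addr_ge0 => //.
by apply: divr_ge0; [rewrite /rho mul1r invr_ge0 ler0n | rewrite exprn_ge0 // ler0n].
Qed.

Lemma inv_step (x : F) : 0 < x -> ((x + 1) ^+ 2)^-1 <= x^-1 - (x + 1)^-1.
Proof.
move=> x0.
have x1 : 0 < x + 1 by lra.
have -> : x^-1 - (x + 1)^-1 = (x * (x + 1))^-1.
  by field; apply/andP; split; apply: lt0r_neq0.
rewrite lef_pV2 ?posrE ?exprn_gt0 ?mulr_gt0 //.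
by rewrite expr2; nra.
Qed.

Lemma S2_bound d : S2 d.+1 <= 2 - (d.+1)%:R^-1.
Proof.
elim: d => [|d IH].
  by rewrite /S2 big_nat1 expr1n invr1; lra.
rewrite /S2 big_nat_recr //= -/(S2 d.+1).
have h := inv_step (x := (d.+1)%:R) (ltr0Sn _ _).
rewrite -[(d.+2)%:R]natr1.
move: IH h; set a := S2 _; set b := (_ ^- 2); set c := (_ + 1)^-1; set e := _^-1; lra.
Qed.

Lemma S2_le2 d : S2 d <= 2.
Proof.
case: d => [|d]; first by rewrite /S2 big_geq //; lra.
have h := S2_bound d.
have : 0 <= (d.+1)%:R^-1 :> F by rewrite invr_ge0 ler0n.
move: h; set a := S2 _; set b := _^-1; lra.
Qed.

Lemma E_bound d : E d * (1 - rho * S2 d) <= 1.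
Proof.
elim: d => [|d IH].
  by rewrite /E /S2 !big_geq // mulr0 subr0 mulr1.
set y := ((d.+1)%:R ^+ 2)^-1 : F.
have -> : E d.+1 = E d * (1 + rho * y) by rewrite /E big_nat_recr.
have -> : S2 d.+1 = S2 d + y by rewrite /S2 big_nat_recr.
have y0 : 0 <= y by rewrite invr_ge0 exprn_ge0 // ler0n.
have e0 := E_ge0 d. have s0 := S2_ge0 d.
have r0 : rho = 1/16 by [].
rewrite r0 in IH *.
have h1 : 0 <= E d * (y * S2 d) by apply: mulr_ge0 => //; apply: mulr_ge0.
have h2 : 0 <= E d * (y * y) by apply: mulr_ge0 => //; apply: mulr_ge0.
move: IH e0 s0 h1 h2 y0; set e := E d; set s := S2 d. nra.
Qed.
Lemma prodF_condT m n (P : pred nat) (G : nat -> F) :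
  (forall j, (m <= j < n)%nat -> P j) ->
  \prod_(m <= j < n | P j) G j = \prod_(m <= j < n) G j.
Proof.
move=> H; rewrite big_nat_cond [RHS]big_nat_cond; apply: eq_bigl => j.
by case: (boolP (m <= j < n)%nat) => h //=; rewrite H.
Qed.

Lemma rho_gt0 : 0 < rho :> F.
Proof. by rewrite /rho mul1r invr_gt0 ltr0n. Qed.

Lemma E_excl d i : (0 < i <= d)%nat ->
  \prod_(1 <= j < d.+1 | j != i) (1 + rho / j%:R ^+ 2) <= E d.
Proof.
move=> /andP[i0 id].
rewrite /E (bigD1_seq i) ?iota_uniq //=; last by rewrite mem_index_iota i0 ltnS.
set P := \prod_(_ <= _ < _ | _) _.
have P0 : 0 <= P.
  apply: prodr_ge0 => j _; apply: addr_ge0 => //; apply: divr_ge0; first exact: ltW rho_gt0.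
  by rewrite exprn_ge0 // ler0n.
have h : 0 <= rho / i%:R ^+ 2 :> F.
  by apply: divr_ge0; [exact: ltW rho_gt0 | rewrite exprn_ge0 // ler0n].
move: P0 h; set q := rho / _; nra.
Qed.

Lemma u0 : u 0 = rho.
Proof. by rewrite /u expr2 mulr0n mul0r addr0. Qed.

Definition Lam d : F :=
  \sum_(0 <= i < d.+1) \prod_(0 <= j < d.+1 | j != i) (u j / `|u j - u i|).

Lemma Lam_bound d : Lam d <= 10 / 7.
Proof.
rewrite /Lam big_ltn // big_ltn_cond // eqxx /=.
rewrite prodF_condT; last by move=> j /andP[j1 _]; rewrite -lt0n.
have e0 : \prod_(1 <= j < d.+1) (u j / `|u j - u 0|) = E d.
  apply: congr_big_nat => // j /andP[_ /andP[j1 _]].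
  have jn0 : (j%:R : F) ^+ 2 != 0 by rewrite expf_neq0 // pnatr_eq0 -lt0n.
  have -> : u j - u 0 = j%:R ^+ 2 by rewrite u0 /u; ring.
  rewrite ger0_norm ?exprn_ge0 ?ler0n // /u.
  by field; rewrite pnatr_eq0 -lt0n.
rewrite e0.
have hi : forall i, (1 <= i < d.+1)%nat ->
   \prod_(0 <= j < d.+1 | j != i) (u j / `|u j - u i|) <= rho / i%:R ^+ 2 * (2 * E d).
  move=> i /andP[i1 id].
  have hid : (0 < i <= d)%nat by rewrite i1 -ltnS.
  have in0 : (i%:R : F) ^+ 2 != 0 by rewrite expf_neq0 // pnatr_eq0 -lt0n.
  rewrite big_ltn_cond // (_ : (0 != i) = true) /=; last by rewrite eq_sym -lt0n.
  have -> : u 0 / `|u 0 - u i| = rho / i%:R ^+ 2.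
    have -> : u 0 - u i = - i%:R ^+ 2 by rewrite u0 /u; ring.
    by rewrite normrN ger0_norm ?exprn_ge0 ?ler0n // u0.
  rewrite (congr_big_nat 1 d.+1 (fun j => j != i)
     (fun j => (1 + rho / j%:R ^+ 2) * (j%:R ^+ 2 / `|j%:R ^+ 2 - i%:R ^+ 2|))) //; last first.
    move=> j /andP[ji /andP[j1 _]].
    have jn0 : (j%:R : F) ^+ 2 != 0 by rewrite expf_neq0 // pnatr_eq0 -lt0n.
    have -> : u j - u i = j%:R ^+ 2 - i%:R ^+ 2 by rewrite /u; ring.
    have dn0 : `|(j%:R : F) ^+ 2 - i%:R ^+ 2| != 0.
      by rewrite normr_eq0 subr_eq0 -!natrX eqr_nat eqn_sqr.
    by rewrite /u; field; rewrite dn0 pnatr_eq0 -lt0n.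
  rewrite big_split /=.
  apply: ler_wpM2l; first by apply: divr_ge0; [exact: ltW rho_gt0 | rewrite exprn_ge0 // ler0n].
  rewrite [2 * E d]mulrC; apply: ler_pM.
  - apply: prodr_ge0 => j _; apply: addr_ge0 => //; apply: divr_ge0; first exact: ltW rho_gt0.
    by rewrite exprn_ge0 // ler0n.
  - by apply: prodr_ge0 => j _; apply: divr_ge0; rewrite ?exprn_ge0 ?ler0n.
  - exact: E_excl.
  - exact: Greal.
apply: (le_trans (lerD (lexx (E d)) (ler_sum_nat hi))).
rewrite -big_distrl /= -big_distrr /= -/(S2 d).
have h1 := E_bound d. have h2 := S2_le2 d. have h3 := S2_ge0 d. have h4 := E_ge0 d.
have r0 : rho = 1/16 :> F by [].
rewrite r0 in h1 *.
move: h1 h2 h3 h4; set e := E d; set s := S2 d.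
have h5 : 0 <= e * (2 - s) -> e * (1 - 1/16 * s) <= 1 -> s <= 2 -> 0 <= s -> 0 <= e -> e + 1/16 * s * (2 * e) <= 10/7.
  nra.
move=> ? ? ? ?; apply: h5 => //; apply: mulr_ge0 => //; lra.
Qed.
Lemma lag_at0 (n : nat) (x : nat -> F) (n0 : (0 < n)%nat) (xi : injective x) (i : 'I_n) :
  `|(tnth (n.-lagrange x) i).[0]| = \prod_(j < n | j != i) (`|x j| / `|x i - x j|).
Proof.
rewrite lagrangeE //=. rewrite hornerCM !horner_prod normrM normfV !normr_prod.
rewrite prodf_div mulrC; congr (_ / _); apply: eq_bigr => j _.
  by rewrite hornerXsubC sub0r normrN.
by rewrite hornerXsubC.
Qed.

Lemma contra (m d : nat) (x : nat -> F) (P : {poly F}) (A : F) :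
  injective x -> (forall i, (i <= d)%nat -> 0 <= x i <= 1) ->
  (size P <= d.+1)%nat -> P.[0] = A -> 1 <= `|A| ->
  (forall r, 0 <= r <= 1 -> `|P.[r] - (1 - r) ^+ m * A| <= 1/3) ->
  \sum_(i < d.+1) (\prod_(j < d.+1 | j != i) (`|x j| / `|x i - x j|)) * ((1 - x i) ^+ m + 1/3) < 1 ->
  False.
Proof.
move=> xi x01 sP PA A1 hP hsum.
have eP := lagrange_gen (ltn0Sn d) xi sP.
have eA : A = \sum_(i < d.+1) P.[x i] * (tnth (d.+1.-lagrange x) i).[0].
  rewrite -PA {1}eP horner_sum; apply: eq_bigr => i _.
  by rewrite hornerM hornerC.
have A0 : 0 < `|A| by apply: lt_le_trans A1; exact: ltr01.
have : `|A| < `|A|; last by rewrite ltxx.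
rewrite {1}eA.
apply: (le_lt_trans (ler_norm_sum _ _ _)).
rewrite -[X in _ < X]mulr1.
move: hsum; set L := (X in X < 1) => hsum.
have hm : `|A| * L < `|A| * 1 by rewrite ltr_pM2l.
apply: (le_lt_trans _ hm); rewrite /L.
rewrite mulr_sumr; apply: ler_sum => i _.
rewrite normrM lag_at0 // mulrC [X in _ <= X]mulrCA.
apply: ler_wpM2l; first by apply: prodr_ge0 => j _; apply: divr_ge0.
have /andP[x0 x1] := x01 i (ltn_ord i).
have s0 : 0 <= (1 - x i) ^+ m by apply: exprn_ge0; rewrite subr_ge0.
have h := hP _ (x01 i (ltn_ord i)).
have h2 : `|P.[x i]| <= (1 - x i) ^+ m * `|A| + 1/3.
  have := ler_normD (P.[x i] - (1 - x i) ^+ m * A) ((1 - x i) ^+ m * A).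
  rewrite subrK normrM (ger0_norm s0) => hh; apply: (le_trans hh).
  by rewrite addrC lerD2l.
apply: (le_trans h2).
move: s0 A1; set s := _ ^+ m; set a := `|A|; nra.
Qed.
Lemma bern (m : nat) (y : F) : 0 <= y <= 1 -> (1 - y) ^+ m * (1 + m%:R * y) <= 1.
Proof.
move=> /andP[y0 y1]; elim: m => [|m IH]; first by rewrite expr0 mul0r addr0 mulr1.
rewrite exprS -natr1.
have s0 : 0 <= (1 - y) ^+ m by apply: exprn_ge0; lra.
have M0 : 0 <= (m%:R : F) by rewrite ler0n.
have h : 0 <= (1 - y) ^+ m * (m%:R * y * y + y * y).
  by apply: mulr_ge0 => //; apply: addr_ge0; rewrite ?mulr_ge0.
move: IH s0 h M0; set s := _ ^+ m; set M := (m%:R : F).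
nra.
Qed.

Lemma u48 i : 48 * u i = 3 + 48 * (i%:R ^+ 2) :> F.
Proof. by rewrite /u /rho; field. Qed.

Lemma nodes_ok (m d : nat) : (3 + 48 * (d * d) <= m)%nat ->
  let x := fun i : nat => 48 * u i / (m%:R : F) in
  [/\ injective x, (forall i, (i <= d)%nat -> 0 <= x i <= 1) &
  \sum_(i < d.+1) (\prod_(j < d.+1 | j != i) (`|x j| / `|x i - x j|)) * ((1 - x i) ^+ m + 1/3) < 1].
Proof.
move=> hm x.
have m0 : (0 < m)%nat by apply: leq_trans hm; rewrite addSn.
have mR : 0 < (m%:R : F) by rewrite ltr0n.
have xE : forall i, x i = (3 + 48 * (i%:R ^+ 2)) / m%:R by move=> i; rewrite /x u48.
have x0 : forall i, 0 <= x i.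
  move=> i; rewrite xE; apply: divr_ge0; last exact: ltW.
  by apply: addr_ge0; [lra | apply: mulr_ge0; [lra | apply: exprn_ge0; exact: ler0n]].
have x01 : forall i, (i <= d)%nat -> 0 <= x i <= 1.
  move=> i hi; rewrite x0 /= xE ler_pdivrMr // mul1r.
  have : (3 + 48 * (i * i) <= m)%nat by apply: leq_trans hm; rewrite leq_add2l leq_mul2l /= leq_mul.
  rewrite -(ler_nat F) natrD natrM !natrM -expr2 => h; apply: le_trans h.
  by rewrite lerD2l ler_wpM2r ?exprn_ge0 ?ler0n // ler_nat.
have hs : forall i, (i <= d)%nat -> (1 - x i) ^+ m <= 1/4.
  move=> i hi; have hb := bern m (x01 i hi).
  have hmx : m%:R * x i = 3 + 48 * (i%:R ^+ 2) by rewrite xE mulrC divfK // lt0r_neq0.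
  have hi2 : 0 <= 48 * (i%:R ^+ 2) :> F by apply: mulr_ge0; [lra | apply: exprn_ge0; exact: ler0n].
  have s0 : 0 <= (1 - x i) ^+ m by apply: exprn_ge0; have := x01 i hi; lra.
  move: hb hmx hi2 s0; set s := _ ^+ m; set t := m%:R * x i; set w := 48 * _; nra.
have hr : forall i j, `|x j| / `|x i - x j| = u j / `|u j - u i|.
  move=> i j; rewrite /x -mulrBl -mulrBr !normrM !normfV (ger0_norm (ltW mR)).
  rewrite (ger0_norm (_ : 0 <= 48 :> F)) ?ler0n // distrC.
  have -> : `|u j| = u j by rewrite ger0_norm // /u; apply: addr_ge0; [exact: ltW rho_gt0 | apply: exprn_ge0; exact: ler0n].
  case: (eqVneq (u j - u i) 0) => [->|hne]; first by rewrite normr0 !mulr0 mul0r !invr0 !mulr0.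
  by field; rewrite normr_eq0 hne lt0r_neq0.
have conv : \sum_(i < d.+1) \prod_(j < d.+1 | j != i) (u j / `|u j - u i|) = Lam d.
  rewrite /Lam big_mkord; apply: eq_bigr => i _; rewrite big_mkord; apply: eq_bigl => j //.
have hL := Lam_bound d.
have hP : forall i : 'I_d.+1, 0 <= \prod_(j < d.+1 | j != i) (u j / `|u j - u i|).
  move=> i; apply: prodr_ge0 => j _; apply: divr_ge0 => //.
  by rewrite /u; apply: addr_ge0; [exact: ltW rho_gt0 | apply: exprn_ge0; exact: ler0n].
split => //.
  move=> i j; rewrite !xE => /(congr1 (fun t => t * m%:R)).
  rewrite !divfK ?lt0r_neq0 // => /addrI /mulfI.
  have n48 : (48 : F) != 0 by rewrite pnatr_eq0.
  move=> /(_ n48); rewrite -!natrX => /eqP; rewrite eqr_nat eqn_sqr => /eqP //.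
apply: (le_lt_trans (y := \sum_(i < d.+1) \prod_(j < d.+1 | j != i) (u j / `|u j - u i|) * (7/12))).
  apply: ler_sum => i _.
  rewrite (eq_bigr (fun j : 'I_d.+1 => u j / `|u j - u i|)); last by move=> j _; rewrite hr.
  apply: ler_wpM2l; first exact: hP.
  have := hs i (ltn_ord i); lra.
rewrite -mulr_suml conv.
move: hL; set L := Lam d; lra.
Qed.
End NumF.
Lemma big_blk (T : Type) (idx : T) (op : Monoid.com_law idx) (n m : nat)
  (blk : 'I_n -> option 'I_m) (G : 'I_n -> T) :
  \big[op/idx]_i G i =
  op (\big[op/idx]_(i | blk i == None) G i)
     (\big[op/idx]_(j : 'I_m) \big[op/idx]_(i | blk i == Some j) G i).
Proof.
rewrite (bigID (fun i => blk i == None)) /=; congr (op _ _).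
rewrite (partition_big blk (fun o => o != None)) //=.
rewrite (reindex_omap Some (fun o : option (ordinal m) => o)); last by case.
apply: eq_big => [j|j _]; first by rewrite /= eqxx.
apply: eq_bigl => i; case: (blk i) => [k|] //=.
Qed.
Section Core.
Local Open Scope ring_scope.
Variables (F : realFieldType) (n m : nat) (blk : 'I_n -> option 'I_m) (v0 v1 : 'I_n -> F).

Definition pt (z : {ffun 'I_m -> bool}) (i : 'I_n) : F :=
  match blk i with Some j => if z j then v1 i else v0 i | None => v0 i end.
Definition wt (r : F) (z : {ffun 'I_m -> bool}) : F := \prod_j (if z j then r else 1 - r).
Definition hb (e : 'X_{1..n}) (j : 'I_m) (b : bool) : F :=
  \prod_(i | blk i == Some j) ((if b then v1 i else v0 i) ^+ e i).
Definition Cn (e : 'X_{1..n}) : F := \prod_(i | blk i == None) (v0 i ^+ e i).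
Definition Qj e j : {poly F} := (hb e j false)%:P + (hb e j true - hb e j false) *: 'X.
Definition Pm e : {poly F} := Cn e *: \prod_j Qj e j.

Lemma mono_split (e : 'X_{1..n}) z : \prod_i pt z i ^+ e i = Cn e * \prod_j hb e j (z j).
Proof.
rewrite (big_blk _ blk); congr (_ * _).
  by apply: eq_bigr => i /eqP h; rewrite /pt h.
by apply: eq_bigr => j _; apply: eq_bigr => i /eqP h; rewrite /pt h; case: (z j).
Qed.

Lemma Pm_eval (e : 'X_{1..n}) r : (Pm e).[r] = \sum_z wt r z * \prod_i pt z i ^+ e i.
Proof.
rewrite hornerZ horner_prod.
under [RHS]eq_bigr do rewrite mono_split mulrCA.
rewrite -mulr_sumr; congr (_ * _).
under [RHS]eq_bigr do rewrite /wt -big_split /=.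
rewrite -(bigA_distr_bigA (fun j b => (if b then r else 1 - r) * hb e j b)).
apply: eq_bigr => j _; rewrite big_bool /= /Qj hornerD hornerC hornerZ hornerX.
ring.
Qed.
Lemma size_Qj (e : 'X_{1..n}) j :
  (size (Qj e j) <= 1 + \sum_(i | blk i == Some j) e i)%nat.
Proof.
case: (posnP (\sum_(i | blk i == Some j) e i)) => [h0|hpos].
  have he : forall i, blk i == Some j -> e i = 0%nat.
    move=> i hi; apply/eqP; move/eqP: h0; rewrite sum_nat_eq0 => /forallP /(_ i).
    by rewrite hi.
  have h1 : forall b, hb e j b = 1.
    by move=> b; apply: big1 => i hi; rewrite he // expr0.
  rewrite /Qj !h1 subrr scale0r addr0; exact: leq_trans (size_polyC_leq1 _) (leq_addr _ _).
apply: (leq_trans (size_polyD _ _)); rewrite geq_max; apply/andP; split.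
  by apply: (leq_trans (size_polyC_leq1 _)); rewrite leq_addr.
apply: (leq_trans (size_scale_leq _ _)); rewrite size_polyX.
by rewrite -[2%nat]/(1 + 1)%nat leq_add2l.
Qed.

Lemma size_Pm (e : 'X_{1..n}) : (size (Pm e) <= (mdeg e).+1)%nat.
Proof.
apply: (leq_trans (size_scale_leq _ _)).
apply: (leq_trans (size_poly_prod_leq _ _)).
have -> : #|(xpredT : pred 'I_m)| = m by rewrite -[RHS](card_ord m); apply: eq_card.
have h1 : (\sum_j size (Qj e j) <= \sum_(j : 'I_m) (1 + \sum_(i | blk i == Some j) e i))%nat.
  by apply: leq_sum => j _; exact: size_Qj.
rewrite big_split /= sum1_card card_ord in h1.
have h2 : (\sum_(j : 'I_m) \sum_(i | blk i == Some j) e i <= mdeg e)%nat.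
  by rewrite mdegE (big_blk _ blk) leq_addl.
have hS : (\sum_i size (Qj e i) <= m + mdeg e)%nat.
  by apply: (leq_trans h1); rewrite leq_add2l.
move: hS; generalize (\sum_i size (Qj e i)) => S hS; lia.
Qed.
Lemma core (p : {mpoly F[n]}) : exists P : {poly F},
  (size P <= msize p)%nat /\ forall r, P.[r] = \sum_z wt r z * p.@[pt z].
Proof.
exists (\sum_(e <- msupp p) p@_e *: Pm e); split.
  rewrite big_seq; apply: (big_ind (fun q : {poly F} => (size q <= msize p)%nat)).
  - by rewrite size_poly0.
  - by move=> a b ha hb; apply: (leq_trans (size_polyD _ _)); rewrite geq_max ha hb.
  - move=> e he; apply: (leq_trans (size_scale_leq _ _)); apply: (leq_trans (size_Pm e)).
    exact: msize_mdeg_lt.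
move=> r; rewrite horner_sum.
under eq_bigr do rewrite hornerZ Pm_eval.
under [RHS]eq_bigr do rewrite mevalE mulr_sumr.
rewrite exchange_big /=; apply: eq_bigr => e _; rewrite mulr_sumr; apply: eq_bigr => z _.
by rewrite mulrCA.
Qed.
End Core.
Section Embed.
Local Open Scope ring_scope.
Variables (F : realFieldType) (n m : nat) (blk : 'I_n -> option 'I_m) (v0 v1 : 'I_n -> F).

Definition z0 : {ffun 'I_m -> bool} := [ffun _ => false].

Lemma wt_sum (r : F) : \sum_(z : {ffun 'I_m -> bool}) wt r z = 1.
Proof.
rewrite /wt -(bigA_distr_bigA (fun (j : 'I_m) (b : bool) => if b then r else 1 - r)).
by apply: big1 => j _; rewrite big_bool /= subrKC.
Qed.

Lemma wt_z0 (r : F) : wt r z0 = (1 - r) ^+ m.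
Proof. by rewrite /wt (eq_bigr (fun _ => 1 - r)) ?prodr_const ?card_ord // => j _; rewrite ffunE. Qed.

Lemma wt0 z : z != z0 -> wt (0 : F) z = 0.
Proof.
move=> hz; have [j hj] : exists j, z j.
  apply/existsP; apply: contraR hz => /existsPn h; apply/eqP/ffunP => j.
  by rewrite ffunE; apply/negbTE.
by rewrite /wt (bigD1 j) //= hj mul0r.
Qed.

Lemma wt_ge0 (r : F) (z : {ffun 'I_m -> bool}) : 0 <= r <= 1 -> 0 <= wt r z.
Proof.
move=> /andP[r0 r1]; apply: prodr_ge0 => j _; case: (z j) => //; rewrite subr_ge0 //.
Qed.

Lemma embed_P (p : {mpoly F[n]}) :
  (forall z, z != z0 -> `|p.@[pt blk v0 v1 z]| <= 1/3) ->
  exists P : {poly F}, (size P <= msize p)%nat /\ P.[0] = p.@[pt blk v0 v1 z0] /\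
    forall r, 0 <= r <= 1 -> `|P.[r] - (1 - r) ^+ m * p.@[pt blk v0 v1 z0]| <= 1/3.
Proof.
move=> hz; have [P [sP eP]] := core blk v0 v1 p.
exists P; split => //; split.
  rewrite eP (bigD1 z0) //= big1 ?addr0; last by move=> z hz0; rewrite wt0 // mul0r.
  rewrite wt_z0 subr0 expr1n mul1r //.
move=> r hr; rewrite eP (bigD1 z0) //= wt_z0 addrC addrK.
apply: (le_trans (ler_norm_sum _ _ _)).
apply: (le_trans (y := \sum_(z | z != z0) wt r z * (1/3))).
  apply: ler_sum => z hz0; rewrite normrM ger0_norm ?wt_ge0 //.
  by apply: ler_wpM2l; [exact: wt_ge0 | exact: hz].
rewrite -mulr_suml; rewrite -[X in _ <= X]mul1r; apply: ler_wpM2r; first lra.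
rewrite -(wt_sum r) [X in _ <= X](bigD1 z0) //= lerDr; exact: wt_ge0.
Qed.
End Embed.
Lemma embed_bound (F : realFieldType) n m (blk : 'I_n -> option 'I_m) (v0 v1 : 'I_n -> F)
  (p : {mpoly F[n]}) d :
  (0 < m)%nat -> (msize p <= d.+1)%nat -> 1 <= `|p.@[pt blk v0 v1 (z0 m)]| ->
  (forall z, z != z0 m -> `|p.@[pt blk v0 v1 z]| <= 1/3) ->
  (0 < d)%nat /\ (m < 3 + 48 * (d * d))%nat.
Proof.
move=> m0 sp A1 hz.
have [P [sP [P0 Pr]]] := embed_P hz.
have sPd : (size P <= d.+1)%nat by apply: leq_trans sp.
split.
  case: d sp sPd => [|d] // sp sPd; exfalso.
  apply: (@contra F m 0 (fun i => i%:R + 1) P _ _ _ sPd P0 A1 Pr).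
  - by move=> i j /addIr /eqP; rewrite eqr_nat => /eqP.
  - move=> i; rewrite leqn0 => /eqP ->; rewrite add0r; apply/andP; split => //; exact: ler01.
  - rewrite big_ord1 big_pred0; last by move=> j; rewrite ord1 eqxx.
    rewrite add0r subrr expr0n /= eqn0Ngt m0 /= mul1r add0r; lra.
rewrite ltnNge; apply/negP => hm.
have [xi x01 hsum] := nodes_ok F hm.
exact: (contra xi x01 sPd P0 A1 Pr hsum).
Qed.
Section DNF.
Local Open Scope nat_scope.

Lemma count_has (A B : Type) (P : A -> B -> bool) (s : seq A) (r : seq B) :
  count (fun b => has (fun a => P a b) s) r <= \sum_(a <- s) count (P a) r.
Proof.
elim: s => [|a s IH] /=; first by rewrite big_nil (eq_count (a2 := pred0)) ?count_pred0.
rewrite big_cons.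
apply: leq_trans (leq_add (leqnn _) IH).
rewrite -(count_predUI (P a)); exact: leq_addr.
Qed.

Lemma sum_const_le (A : eqType) (s : seq A) (G : A -> nat) c :
  (forall a, a \in s -> G a <= c) -> \sum_(a <- s) G a <= size s * c.
Proof.
elim: s => [|a s IH] h; first by rewrite big_nil.
rewrite big_cons /= mulSn leq_add ?h ?mem_head //.
by apply: IH => b hb; apply: h; rewrite in_cons hb orbT.
Qed.

Variable n : nat.
Definition cnt (i : 'I_n) (t : term n) := count (fun l : literal n => l.1 == i) t.
Definition hasv (i : 'I_n) (t : term n) := has (fun l : literal n => l.1 == i) t.
Definition disj (t t' : term n) := all (fun l : literal n => ~~ hasv l.1 t') t.

Lemma disj_sym t t' : disj t t' = disj t' t.
Proof.
rewrite /disj /hasv.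
apply/allP/allP => h l hl; apply/hasPn => l' hl'; apply/negP => /eqP e;
  have := h l' hl'; rewrite /= => /hasPn /(_ l hl); by rewrite e eqxx.
Qed.

Lemma greedy k b (F : dnf n) : 0 < k -> 0 < b ->
  (forall t, t \in F -> size t <= b) ->
  (forall i, \sum_(t <- F) cnt i t <= k) ->
  exists S : dnf n, all (mem F) S /\ pairwise disj S /\ size F <= size S * (k * b).
Proof.
move=> k0 b0.
move: {2}(size F) (leqnn (size F)) => N; elim: N F => [|N IH] F.
  by rewrite leqn0 => /nilP -> _ _; exists [::].
case: F => [|t F'] hN hb hk; first by exists [::].
set F'' := filter (disj t) F'.
have [S [hS1 [hS2 hS3]]] : exists S : dnf n, all (mem F'') S /\ pairwise disj S /\ size F'' <= size S * (k * b).
  apply: IH.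
  - by rewrite size_filter; apply: leq_trans (count_size _ _) _; rewrite -ltnS.
  - by move=> s; rewrite mem_filter => /andP[_ hs]; apply: hb; rewrite in_cons hs orbT.
  - move=> i; apply: leq_trans (hk i); rewrite big_cons big_filter big_mkcond /=.
    apply: leq_trans (leq_addl (cnt i t) _); apply: leq_sum => s _; by case: ifP.
exists (t :: S); split; [|split].
- rewrite /= mem_head /=; apply/allP => s hs; have := allP hS1 s hs.
  by rewrite /= mem_filter => /andP[_ h]; rewrite in_cons h orbT.
- rewrite /= hS2 andbT; apply/allP => s hs; have := allP hS1 s hs.
  by rewrite /= mem_filter => /andP[].
have hc : count (predC (disj t)) F' <= size t * (k - 1).
  have e : count (predC (disj t)) F' = count (fun t' => has (fun l : literal n => hasv l.1 t') t) F'.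
    by apply: eq_count => t'; rewrite /= /disj -has_predC; apply: eq_has => l /=; rewrite negbK.
  rewrite e; apply: leq_trans (count_has _ _ _) _.
  apply: sum_const_le => l hl.
  have h1 := hk l.1; rewrite big_cons in h1.
  have h2 : 0 < cnt l.1 t by rewrite /cnt -has_count; apply/hasP; exists l.
  have h3 : count (hasv l.1) F' <= \sum_(s <- F') cnt l.1 s.
    rewrite -sum1_count big_mkcond /=; apply: leq_sum => s _.
    by rewrite /hasv has_count; case: ifP.
  apply: leq_trans h3 _; lia.
have hF := count_predC (disj t) F'.
rewrite -size_filter -/F'' in hF.
have hb1 : size t <= b by apply: hb; exact: mem_head.
rewrite /= mulSn.
have : size t * (k - 1) <= b * (k - 1) by rewrite leq_mul2r hb1 orbT.
move: hS3 hc hF; set K := k * b; set s1 := size F''; set s2 := size S.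
have : 1 + b * (k - 1) <= K by rewrite /K; nia.
lia.
Qed.
End DNF.
Section Glue.
Variable n : nat.
Implicit Types (F S : dnf n) (t : term n) (x : cube n).

Lemma has_rem F t x : t \in F -> dnf_eval F x = term_eval t x || dnf_eval (rem t F) x.
Proof. by move=> ht; rewrite /dnf_eval (perm_has _ (perm_to_rem ht)). Qed.

Lemma min_sat F t : minimal_dnf F -> t \in F -> exists x, term_eval t x.
Proof.
case=> [h1 _] ht; have [x hx] := h1 t ht; exists x; move: hx.
by rewrite (has_rem _ ht); case: (term_eval t x) => //=; rewrite eqxx.
Qed.

Lemma min_zero F t l : minimal_dnf F -> t \in F -> l \in t -> exists x, dnf_eval F x = false.
Proof.
case=> [_ h2] ht hl; have [x hx] := h2 t l ht hl; exists x; move: hx.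
have imp : term_eval t x -> term_eval (rem l t) x.
  move/allP => H; apply/allP => l' hl'; apply: H; exact: (mem_subseq (rem_subseq _ _) hl').
rewrite (has_rem _ ht) /dnf_eval /= -/(dnf_eval (rem t F) x).
move: imp; case: (term_eval t x); case: (term_eval (rem l t) x); case: (dnf_eval (rem t F) x) => //=.
by move=> /(_ isT).
Qed.

Lemma third : Rdiv (IZR 1) (IZR 3) = GRing.mul (1 : R) (GRing.inv (3%:R)).
Proof. by rewrite RdivE R1E IZRposE INRE. Qed.

Lemma embed_main F f S x0 (p : {mpoly R[n]}) :
  computes F f -> (forall t, t \in F -> exists x, term_eval t x) ->
  all (mem F) S -> pairwise (@disj n) S -> f x0 = false ->
  N_witness (bcompl f) p -> (0 < size S)%nat ->
  (0 < mpdeg p)%nat /\ (size S < 3 + 48 * (mpdeg p * mpdeg p))%nat.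
Proof.
move=> hF hsat hSF hSd hx0 hW m0.
set m := size S.
pose T (j : 'I_m) := nth [::] S j.
have TF : forall j, T j \in F.
  by move=> j; apply: (allP hSF); rewrite mem_nth.
have Td : forall j1 j2 : 'I_m, j1 != j2 -> disj (T j1) (T j2).
  move=> j1 j2 hne; have /pairwiseP hP := hSd.
  case: (ltngtP j1 j2) => h.
  - by apply: hP => //; rewrite inE ltn_ord.
  - by rewrite disj_sym; apply: hP => //; rewrite inE ltn_ord.
  - by have e : j1 = j2 := val_inj h; rewrite e eqxx in hne.
pose blk (i : 'I_n) : option 'I_m := [pick j : 'I_m | hasv i (T j)].
have blk_spec : forall j i, hasv i (T j) -> blk i = Some j.
  move=> j i hi; rewrite /blk; case: pickP => [j' hj'|hnone]; last by rewrite hnone in hi.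
  case: (eqVneq j' j) => [->//|hne].
  have := Td _ _ hne; rewrite /disj => /allP.
  move: hj' => /hasP [l hl /eqP hli] /(_ l hl) /=; rewrite hli hi //.
pose sat (j : 'I_m) : cube n := odflt x0 [pick y | term_eval (T j) y].
have sat_ok : forall j, term_eval (T j) (sat j).
  move=> j; rewrite /sat; case: pickP => [y hy //|hnone].
  have [y hy] := hsat _ (TF j); by rewrite hnone in hy.
pose y (z : {ffun 'I_m -> bool}) : cube n :=
  [ffun i => match blk i with Some j => if z j then sat j i else x0 i | None => x0 i end].
pose v0 := cube_pt x0.
pose v1 (i : 'I_n) : R := match blk i with Some j => cube_pt (sat j) i | None => 0 end.
have hpt : forall z, cube_pt (y z) =1 pt blk v0 v1 z.
  move=> z i; rewrite /cube_pt /pt /v0 /v1 ffunE; case: (blk i) => [j|] //; by case: (z j).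
have hy0 : y (z0 m) = x0 by apply/ffunP => i; rewrite ffunE; case: (blk i) => [j|] //; rewrite ffunE.
have hy1 : forall z, z != z0 m -> f (y z) = true.
  move=> z hz; have [j hj] : exists j, z j.
    apply/existsP; apply: contraR hz => /existsPn h; apply/eqP/ffunP => j.
    by rewrite ffunE; apply/negbTE.
  rewrite hF; apply/hasP; exists (T j) => //; apply/allP => l hl.
  rewrite ffunE (blk_spec j l.1); last by apply/hasP; exists l.
  rewrite hj; exact: (allP (sat_ok j) l hl).
have := @embed_bound R n m blk v0 v1 p (mpdeg p) m0.
apply.
- by rewrite /mpdeg; case: (msize p).
- have [_ h] := hW (y (z0 m)).
  have e : p.@[cube_pt x0] = p.@[pt blk v0 v1 (z0 m)].
    by rewrite -{1}hy0; apply: meval_eq; exact: hpt.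
  by have := h; rewrite /bcompl hy0 hx0 => /(_ erefl) /RleP; rewrite e.
- move=> z hz; have [h _] := hW (y z).
  have := h; rewrite /bcompl hy1 // => /(_ erefl) /RleP.
  have e : p.@[cube_pt (y z)] = p.@[pt blk v0 v1 z] by apply: meval_eq; exact: hpt.
  by have := h; rewrite /bcompl hy1 // => /(_ erefl) /RleP; rewrite e third.
Qed.
End Glue.
Lemma min_exists (P : nat -> Prop) : (exists d, P d) ->
  exists d, P d /\ forall d', P d' -> (d <= d')%nat.
Proof.
move=> [d Pd]; elim/ltn_ind: d Pd => d IH Pd.
case: (classic (exists d', P d' /\ (d' < d)%nat)) => [[d' [Pd' lt]]|H].
  exact: IH lt Pd'.
exists d; split => // d' Pd'; rewrite leqNgt; apply/negP => lt; by apply: H; exists d'.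
Qed.

Lemma cube_ptE n (x : cube n) i : cube_pt x i = if x i then 1 else 0.
Proof. by []. Qed.

Lemma interp_ach n (g : boolfun n) : exists d, N_achievable g d.
Proof.
pose p : {mpoly R[n]} := \sum_(x : cube n | g x) \prod_(i : 'I_n) (if x i then 'X_i else 1 - 'X_i).
have ev : forall y : cube n, p.@[cube_pt y] = (g y)%:R.
  move=> y; rewrite (big_morph _ (mevalD _) (meval0 _)).
  have e1 : forall x : cube n, (\prod_(i : 'I_n) (if x i then 'X_i else 1 - 'X_i) : {mpoly R[n]}).@[cube_pt y] = (x == y)%:R.
    move=> x; rewrite (big_morph _ (mevalM _) (meval1 _)).
    case: (eqVneq x y) => [->|hne] /=.
      apply: big1 => i _; case hyi: (y i); rewrite ?mevalB ?meval1 ?mevalXU cube_ptE hyi //.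
      exact: subr0.
    have [i hi] : exists i, x i != y i.
      apply/existsP; apply: contraR hne => /existsPn h; apply/eqP/ffunP => i.
      by apply/eqP; move: (h i); rewrite negbK.
    rewrite (bigD1 i) //=; move: hi; case hxi: (x i); case hyi: (y i) => //= _;
      rewrite ?mevalB ?meval1 ?mevalXU cube_ptE hyi.
      exact: mul0r.
    rewrite (_ : 1 - R1 = 0) ?mul0r //; exact: subrr.
  under eq_bigr do rewrite e1.
  case hy: (g y).
    by rewrite (bigD1 y) //= eqxx big1 ?addr0 // => x /andP[_ hx]; rewrite (negbTE hx).
  by apply: big1 => x hx; case: (eqVneq x y) => [e|//]; rewrite e hy in hx.
exists (mpdeg p); exists p; split => // x; rewrite ev; split => ->.
  by apply/RleP; rewrite third RabsE /= mulr0n normr0 mul1r invr_ge0 ler0n.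
by apply/RleP; rewrite RabsE /= mulr1n normr1; exact: lexx.
Qed.

Lemma Ndeg_ach n (g : boolfun n) : N_achievable g (Ndeg g).
Proof.
have [d [hd hmin]] := min_exists (interp_ach g).
rewrite /Ndeg; case: excluded_middle_informative => [H|H].
  exact: (proj1 (proj2_sig (constructive_indefinite_description _ H))).
by exfalso; apply: H; exists d; split.
Qed.


Theorem lemma3p22 :
  exists c : R, (0 < c)%R /\
    forall (n k : nat) (f : boolfun n) (F : dnf n),
      computes F f -> read_k k F -> minimal_dnf F ->
      (c * sqrt (INR (dnf_size F) / (INR k * INR (dnf_width F)))
         <= INR (Ndeg (bcompl f)))%R.
Proof.
exists (Rinv (sqrt (INR 51))); split.
  apply/RltP; rewrite RinvE RsqrtE INRE R0E invr_gt0 sqrtr_gt0 ltr0n //.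
move=> n k f F hF hk hmin.
apply/RleP; rewrite RmultE RsqrtE RdivE RmultE !INRE RinvE RsqrtE.
set a := dnf_size F; set b := dnf_width F; set d := Ndeg (bcompl f).
have c0 : 0 <= (Num.sqrt (51%:R : R))^-1 by rewrite invr_ge0 sqrtr_ge0.
case: (posnP k) => [->|kpos].
  by rewrite GRing.mul0r GRing.invr0 GRing.mulr0 sqrtr0 GRing.mulr0 ler0n.
case: (posnP b) => [->|bpos].
  by rewrite GRing.mulr0 GRing.invr0 GRing.mulr0 sqrtr0 GRing.mulr0 ler0n.
case: (posnP a) => [->|apos].
  by rewrite GRing.mul0r sqrtr0 GRing.mulr0 ler0n.
have hall : ~~ all (fun t => size t == 0%nat) F.
  apply/negP => hall; move: bpos; rewrite /b /dnf_width big_seq big1 //.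
  by move=> t ht; apply/eqP; exact: (allP hall t ht).
have [t ht ht0] : exists2 t, t \in F & size t != 0%nat.
  by move: hall; rewrite -has_predC => /hasP[t ht h]; exists t.
have [l hl] : exists l, l \in t by case: t ht0 {ht} => [|l t'] // _; exists l; rewrite mem_head.
have [x0 hx0] := min_zero hmin ht hl.
have fx0 : f x0 = false by rewrite hF.
have hsat : forall t, t \in F -> exists x, term_eval t x := fun t ht => min_sat hmin ht.
have hwid : forall t, t \in F -> (size t <= b)%nat by move=> t' ht'; exact: leq_bigmax_seq.
have [S [hSF [hSd hSz]]] := greedy kpos bpos hwid hk.
have m0 : (0 < size S)%nat.
  rewrite lt0n; apply/negP => /eqP e; move: hSz; rewrite e mul0n leqn0 => /eqP ea.
  by move: apos; rewrite /a /dnf_size ea.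
have [p [hW hd]] := Ndeg_ach (bcompl f).
have [d0 dm] := embed_main hF hsat hSF hSd fx0 hW m0.
rewrite hd -/d in d0 dm.
have h3 : (a <= 51 * (d * d) * (k * b))%nat.
  apply: leq_trans hSz _; rewrite leq_mul2r; apply/orP; right; nia.
have kb : 0 < (k%:R : R) * b%:R by rewrite mulr_gt0 ?ltr0n.
have q : (a%:R : R) / (k%:R * b%:R) <= 51%:R * d%:R ^+ 2.
  rewrite ler_pdivrMr // expr2 -!natrM ler_nat; exact: h3.
have sq : Num.sqrt ((a%:R : R) / (k%:R * b%:R)) <= Num.sqrt 51%:R * d%:R.
  rewrite -[X in _ <= _ * X](@ger0_norm _ (d%:R : R)) ?ler0n // -sqrtr_sqr -sqrtrM ?ler0n //.
  by rewrite ler_sqrt // mulr_ge0 ?ler0n ?exprn_ge0.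
have s51 : Num.sqrt (51%:R : R) != 0 by rewrite sqrtr_eq0 -ltNge ltr0n.
apply: le_trans (ler_wpM2l c0 sq) _.
by rewrite mulrA mulVf // mul1r.
Qed.
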